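(* Let $m\geq1$ and for $n\geq 0$ let $h_n$ be the number of $(2m+1)$-historic trees on $n+m$ vertices. Then the exponential generating function $H(x)=\sum_{n\geq0}h_n\frac{x^n}{n!}$ satisfies, as a formal power series, \[ H^{(m+1)}(x)=H(x)^2,\qquad H(0)=H'(0)=\cdots=H^{(m)}(0)=1. \]
   Context: A $(2m+1)$-historic tree on $N$ vertices is a rooted plane tree whose vertices are labelled bijectively by $\{1,\dots,N\}$ with labels increasing along every path from the root to a leaf, such that (root at height $0$) the vertices at heights $2m,3m+1,4m+2,\dots$ (i.e. $2m+j(m+1)$, $j\geq0$), called branchings, have two ordered child slots (left and right), each of which may or may not be occupied, while all other vertices have a single child slot (at most one child). Two such trees are equal if they agree as labelled plane trees, with a single child of a branching distinguished as left or right. *)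

(* Defs.v *)
From mathcomp Require Import all_boot all_order all_algebra.
Set Implicit Arguments. Unset Strict Implicit. Unset Printing Implicit Defensive.
Import Order.TTheory GRing.Theory Num.Theory.

(* A labelled tree on N vertices is encoded on the vertex set 'I_N, where
   vertex i carries label i+1.  [f i = None] means i is the root;
   [f i = Some (j, b)] means i is a child of j, occupying slot b of j
   (b = false: the left slot, or the unique slot of a non-branching vertex;
    b = true: the right slot of a branching vertex). *)

Definition tree_code (N : nat) := {ffun 'I_N -> option ('I_N * bool)}.

Fixpoint hgt (N : nat) (f : tree_code N) (fuel : nat) (i : 'I_N) : nat :=
  match fuel with
  | 0 => 0
  | k.+1 => match f i with None => 0 | Some (j, _) => (@hgt N f k j).+1 end
  end.

Definition height (N : nat) (f : tree_code N) (i : 'I_N) : nat := @hgt N f N i.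

Definition branching_height (m h : nat) : bool :=
  (2 * m <= h) && ((h - 2 * m) %% m.+1 == 0).

Definition historic (m N : nat) (f : tree_code N) : bool :=
  [forall i : 'I_N, (f i == None) == (val i == 0)] &&
  [forall i : 'I_N, forall j : 'I_N, forall b : bool,
     (f i == Some (j, b)) ==>
       ((val j < val i) && (b ==> branching_height m (@height N f j)))] &&
  [forall i : 'I_N, forall i' : 'I_N,
     ((f i != None) && (f i == f i')) ==> (i == i')].

Definition historic_count (m N : nat) : nat := #|[pred f : tree_code N | @historic m N f]|.

Local Open Scope ring_scope.

Definition fps := nat -> rat.

Definition fps_deriv (F : fps) : fps := fun n => F n.+1 *+ n.+1.

Definition fps_mul (F G : fps) : fps :=
  fun n => \sum_(k < n.+1) F k * G (n - k)%N.

Definition egf (a : nat -> nat) : fps := fun n => (a n)%:R / (n`!)%:R.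

(* Main.v *)
Require Import Defs.
From mathcomp Require Import all_boot all_order all_algebra zify.
From mathcomp.algebra_tactics Require Import ring.
From Stdlib Require Import FunctionalExtensionality.
Set Implicit Arguments. Unset Strict Implicit. Unset Printing Implicit Defensive.
Import Order.TTheory GRing.Theory Num.Theory.

Fixpoint frec (N : nat) (A : Type) (a0 : A) (st : 'I_N -> bool -> A -> A)
  (f : tree_code N) (k : nat) (i : 'I_N) : A :=
  match k with 0 => a0 | k.+1 =>
    match f i with None => a0 | Some (j, b) => st j b (frec a0 st f k j) end end.

Definition PS N (f : tree_code N) := forall i j b, f i = Some (j, b) -> (j < i)%N.

Lemma frec_stable N A a0 st (f : tree_code N) : PS f ->
  forall k1 k2 (i : 'I_N), (i < k1)%N -> (i < k2)%N -> @frec N A a0 st f k1 i = frec a0 st f k2 i.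
Proof.
move=> ps; elim=> [|k1 IH] [|k2] i //=.
move=> h1 h2; case E: (f i) => [[j b]|] //.
have := ps _ _ _ E => ji.
by rewrite (IH k2) //; lia.
Qed.

Definition fval N A a0 st (f : tree_code N) i := @frec N A a0 st f N i.
Definition frecrel N A a0 (st : 'I_N -> bool -> A -> A) (f : tree_code N) (G : 'I_N -> A) :=
  forall i, G i = match f i with None => a0 | Some (j, b) => st j b (G j) end.

Lemma fval_rec N A a0 st f : PS f -> @frecrel N A a0 st f (fval a0 st f).
Proof.
move=> ps i; rewrite /fval (@frec_stable N A a0 st f ps N i.+1 i (ltn_ord i) (ltnSn i)) /=.
case E: (f i) => [[j b]|] //; congr st.
apply: frec_stable => //; first exact: (ps _ _ _ E); exact: ltn_ord.
Qed.

Lemma frec_unique N A a0 st (f : tree_code N) G1 G2 : PS f ->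
  @frecrel N A a0 st f G1 -> frecrel a0 st f G2 -> G1 =1 G2.
Proof.
move=> ps h1 h2 i.
suff H : forall n (i : 'I_N), (i < n)%N -> G1 i = G2 i by exact: (H i.+1).
elim=> [//|n IH] {}i lt; rewrite h1 h2; case E: (f i) => [[j b]|] //.
rewrite IH //; have := ps _ _ _ E; lia.
Qed.

Lemma frecrel_eq N A a0 st (f : tree_code N) G1 G2 :
  G1 =1 G2 -> @frecrel N A a0 st f G2 -> frecrel a0 st f G1.
Proof. move=> e h i; rewrite e h; case: (f i) => [[j b]|] //; by rewrite e. Qed.

Lemma hgt_frec N (f : tree_code N) k i : hgt f k i = frec 0 (fun _ _ h => h.+1) f k i.
Proof. elim: k i => [|k IH] i //=; case: (f i) => [[j b]|] //; by rewrite IH. Qed.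

Definition hrel N (f : tree_code N) H := frecrel 0 (fun _ _ h => h.+1) f H.

Lemma height_rec N (f : tree_code N) : PS f -> hrel f (height f).
Proof.
move=> ps; apply: (@frecrel_eq _ _ _ _ _ _ (fval 0 (fun _ _ h => h.+1) f)).
  by move=> i; rewrite /height hgt_frec.
exact: fval_rec.
Qed.

Lemma height_uniq N (f : tree_code N) H : PS f -> hrel f H -> H =1 height f.
Proof. move=> ps h; apply: frec_unique ps h (height_rec ps). Qed.

Definition hist' (B : nat -> bool) (N : nat) (f : tree_code N) : bool :=
  [forall i : 'I_N, (f i == None) == (val i == 0)] &&
  [forall i : 'I_N, forall j : 'I_N, forall b : bool,
     (f i == Some (j, b)) ==>
       ((val j < val i) && (b ==> B (@height N f j)))] &&
  [forall i : 'I_N, forall i' : 'I_N,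
     ((f i != None) && (f i == f i')) ==> (i == i')].

Lemma historicE m N f : @historic m N f = hist' (branching_height m) f.
Proof. by []. Qed.

Lemma histP B N (f : tree_code N) :
  hist' B f <-> [/\ PS f, (forall i, f i = None -> val i = 0),
      (forall i j, f i = Some (j, true) -> B (height f j)) &
      (forall i i', f i != None -> f i = f i' -> i = i')].
Proof.
split.
- case/andP=> /andP[/forallP r /forallP p] /forallP u; split.
  + move=> i j b E; move: (p i) => /forallP/(_ j)/forallP/(_ b).
    by rewrite E eqxx /= => /andP[].
  + move=> i E; move: (r i); rewrite E eqxx eq_sym eqb_id. by move/eqP.
  + move=> i j E; move: (p i) => /forallP/(_ j)/forallP/(_ true).
    by rewrite E eqxx /= => /andP[].
  + move=> i i' h E; move: (u i) => /forallP/(_ i'); rewrite h E eqxx /=.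
    by move/eqP.
- case=> ps r p u; apply/andP; split; [apply/andP; split|].
  + apply/forallP=> i; case E: (f i) => [[j b]|]; last by rewrite (r _ E) eqxx.
    have := ps _ _ _ E; move=> lt /=; rewrite eq_sym eqbF_neg; apply/eqP; lia.
  + apply/forallP=> i; apply/forallP=> j; apply/forallP=> b; apply/implyP=> /eqP E.
    rewrite (ps _ _ _ E) /=; case: b E => //= E; exact: p E.
  + apply/forallP=> i; apply/forallP=> i'; apply/implyP=> /andP[h /eqP E].
    by rewrite (u _ _ h E).
Qed.

Definition up N (g : tree_code N) : tree_code N.+1 :=
  [ffun x => if unlift ord0 x is Some i then
     Some (if g i is Some (j, b) then (lift ord0 j, b) else (ord0, false)) else None].
Definition down N (f : tree_code N.+1) : tree_code N :=
  [ffun i => if f (lift ord0 i) is Some (j, b) then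
     (if unlift ord0 j is Some j' then Some (j', b) else None) else None].

Lemma up_ord0 N (g : tree_code N) : up g ord0 = None.
Proof. by rewrite ffunE unlift_none. Qed.
Lemma up_lift N (g : tree_code N) i : up g (lift ord0 i) =
  Some (if g i is Some (j, b) then (lift ord0 j, b) else (ord0, false)).
Proof. by rewrite ffunE liftK. Qed.

Lemma downK N : cancel (@up N) (@down N).
Proof.
move=> g; apply/ffunP=> i; rewrite ffunE up_lift.
case: (g i) => [[j b]|] /=; by rewrite ?liftK ?unlift_none.
Qed.

Lemma PS_up N (g : tree_code N) : PS (up g) <-> PS g.
Proof.
split=> ps.
- move=> i j b E; have := ps (lift ord0 i) (lift ord0 j) b; rewrite up_lift E.
  by move=> /(_ erefl); rewrite !lift0.
- move=> x y b; case: (unliftP ord0 x) => [i ->|->]; rewrite ?up_ord0 ?up_lift //.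
  case E: (g i) => [[j b']|] [<- _]; rewrite !lift0 //; exact: ps E.
Qed.

Lemma height_up N (g : tree_code N) : PS g -> forall i,
  height (up g) (lift ord0 i) = (height g i).+1 /\ height (up g) ord0 = 0.
Proof.
move=> ps.
pose H x := if unlift ord0 x is Some i then (height g i).+1 else 0.
have hr : hrel (up g) H.
  move=> x; rewrite /H; case: (unliftP ord0 x) => [i ->|->]; rewrite ?up_ord0 ?up_lift ?unlift_none ?liftK //.
  rewrite (height_rec ps i); case: (g i) => [[j b]|] //=; by rewrite ?liftK ?unlift_none.
have e := height_uniq (proj2 (PS_up g) ps) hr.
by move=> i; rewrite -!e /H liftK unlift_none.
Qed.

Lemma hist_up B N (g : tree_code N) : B 0 = false ->
  hist' B (up g) <-> hist' (fun h => B h.+1) g.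
Proof.
move=> B0; split.
- case/histP=> psu r p u; have ps := proj1 (PS_up g) psu.
  have hu := height_up ps.
  apply/histP; split => //.
  + move=> i E.
    have i0 : (0 < N)%N by apply: leq_ltn_trans (leq0n i) (ltn_ord i).
    pose z := Ordinal i0.
    have gz : g z = None by case Ez: (g z) => [[j b]|] //; have := ps _ _ _ Ez.
    have := u (lift ord0 i) (lift ord0 z); rewrite !up_lift E gz => /(_ isT erefl).
    by move=> ee; rewrite (lift_inj ee).
  + move=> i j E; have := p (lift ord0 i) (lift ord0 j); rewrite up_lift E.
    by rewrite (proj1 (hu j)) => /(_ erefl).
  + move=> i i' h E; have := u (lift ord0 i) (lift ord0 i'); rewrite !up_lift E.
    by move=> /(_ isT erefl) ee; exact: (lift_inj ee).
- case/histP=> ps r p u; have hu := height_up ps.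
  apply/histP; split; first exact/PS_up.
  + move=> x; case: (unliftP ord0 x) => [i ->|->]; by rewrite ?up_ord0 ?up_lift.
  + move=> x y; case: (unliftP ord0 x) => [i ->|->]; rewrite ?up_ord0 ?up_lift //.
    case E: (g i) => [[j b]|] //= [<- eb]; subst b; rewrite (proj1 (hu j)); exact: p E.
  + move=> x x'; case: (unliftP ord0 x) => [i ->|->]; rewrite ?up_ord0 ?up_lift //.
    case: (unliftP ord0 x') => [i' ->|->]; rewrite ?up_ord0 ?up_lift // => _.
    case E: (g i) => [[j b]|]; case E': (g i') => [[j' b']|] //.
    * case=> ej eb; have ej2 : j = j' by apply: ord_inj; lia. subst; congr lift; apply: u; by rewrite ?E ?E'.
    * move=> _; congr lift; apply: ord_inj; by rewrite (r _ E) (r _ E').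
Qed.

Lemma upK_hist B N (f : tree_code N.+1) : B 0 = false -> hist' B f -> up (down f) = f.
Proof.
move=> B0 /histP[ps r p u]; apply/ffunP=> x.
case: (unliftP ord0 x) => [i ->|->].
- rewrite up_lift ffunE; case E: (f (lift ord0 i)) => [[j b]|]; last first.
    by have := r _ E.
  case: (unliftP ord0 j) E => [j' ->|->] E //.
  case: b E => // E; have := p _ _ E; rewrite (height_rec ps ord0).
  case Ez: (f ord0) => [[jj bb]|]; [by have := ps _ _ _ Ez | by rewrite B0].
- rewrite up_ord0; case Ez: (f ord0) => [[j b]|] //; by have := ps _ _ _ Ez.
Qed.

Lemma cnt_up B N : B 0 = false ->
  #|[pred f : tree_code N.+1 | hist' B f]| =
  #|[pred g : tree_code N | hist' (fun h => B h.+1) g]|.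
Proof.
move=> B0; rewrite -(card_imset _ (can_inj (@downK N))).
apply: eq_card => f; rewrite inE; apply/idP/imsetP.
- move=> hf; exists (down f); last by rewrite (upK_hist B0 hf).
  rewrite inE; apply/(hist_up _ B0); by rewrite (upK_hist B0 hf).
- case=> g; rewrite inE => hg ->; exact/(hist_up _ B0).
Qed.

Definition sv N (T : {set 'I_N}) : 'I_#|T| -> 'I_N := @Order.enum_val _ 'I_N (pred_of_set T).
Arguments sv {N} T _.

Lemma sv_le N (T : {set 'I_N}) (i j : 'I_#|T|) : (sv T i <= sv T j)%N = (i <= j)%N.
Proof. exact: (@Order.le_enum_val _ 'I_N (@le_total _ 'I_N) _ i j). Qed.

Lemma sv_lt N (T : {set 'I_N}) (i j : 'I_#|T|) : (sv T i < sv T j)%N = (i < j)%N.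
Proof. by rewrite !ltnNge sv_le. Qed.

Lemma sv_inj N (T : {set 'I_N}) : injective (sv T).
Proof. move=> i j e; apply: ord_inj; apply/eqP; by rewrite eqn_leq -!sv_le e leqnn. Qed.

Lemma sv_in N (T : {set 'I_N}) r : sv T r \in T.
Proof. exact: Order.enum_valP. Qed.

Lemma sv_surj N (T : {set 'I_N}) x : x \in T -> exists r, sv T r = x.
Proof. move=> h; exists (Order.enum_rank_in h x); exact: (Order.enum_rankK_in h h). Qed.

Definition rk N (T : {set 'I_N}) (x : 'I_N) : option 'I_#|T| := [pick r | sv T r == x].

Lemma rk_sv N (T : {set 'I_N}) r : rk T (sv T r) = Some r.
Proof.
rewrite /rk; case: pickP => [r' /eqP /sv_inj -> // | /(_ r)]; by rewrite eqxx.
Qed.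

Lemma rk_out N (T : {set 'I_N}) x : x \notin T -> rk T x = None.
Proof. rewrite /rk; case: pickP => // r /eqP <-; by rewrite sv_in. Qed.

Definition enc N k (s : 'I_k -> 'I_N) (side : bool) (e : option ('I_k * bool)) :
  option ('I_N.+1 * bool) :=
  Some (if e is Some (j, b) then (lift ord0 (s j), b) else (ord0, side)).
Definition dec N k (rk' : 'I_N -> option 'I_k) (e : option ('I_N.+1 * bool)) :
  option ('I_k * bool) :=
  if e is Some (j, b) then (if unlift ord0 j is Some j' then
     (if rk' j' is Some r then Some (r, b) else None) else None) else None.

Lemma dec_enc N (T : {set 'I_N}) s e : dec (rk T) (enc (sv T) s e) = e.
Proof. case: e => [[j b]|] /=; by rewrite ?liftK ?rk_sv ?unlift_none. Qed.

Lemma enc_eq N k1 k2 (s1 : 'I_k1 -> 'I_N) (s2 : 'I_k2 -> 'I_N) c1 c2 e1 e2 :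
  enc s1 c1 e1 = enc s2 c2 e2 ->
  match e1, e2 with None, None => c1 = c2
  | Some (j1, b1), Some (j2, b2) => s1 j1 = s2 j2 /\ b1 = b2 | _, _ => False end.
Proof.
move=> h.
have h1 := congr1 (fun o : option ('I_N.+1 * bool) => if o is Some (y, _) then val y else 0) h.
have h2 := congr1 (fun o : option ('I_N.+1 * bool) => if o is Some (_, c) then c else false) h.
move: h1 h2; clear h; case: e1 => [[j1 b1]|]; case: e2 => [[j2 b2]|] /=; rewrite ?lift0 // => h1 h2.
split => //; apply: ord_inj; move: h1; rewrite /bump /=; lia.
Qed.

Definition Psi N (S : {set 'I_N}) (gL : tree_code #|S|) (gR : tree_code #|~: S|) :
  tree_code N.+1 :=
  [ffun x => if unlift ord0 x is Some i then
     (if rk S i is Some r then enc (sv S) false (gL r)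
      else if rk (~: S) i is Some r then enc (sv (~: S)) true (gR r) else None) else None].
Arguments Psi {N} S gL gR.
Definition Phi N (T : {set 'I_N}) (f : tree_code N.+1) : tree_code #|T| :=
  [ffun r => dec (rk T) (f (lift ord0 (sv T r)))].

Lemma Psi0 N (S : {set 'I_N}) gL gR : Psi S gL gR ord0 = None.
Proof. by rewrite ffunE unlift_none. Qed.
Lemma PsiL N (S : {set 'I_N}) gL gR r :
  Psi S gL gR (lift ord0 (sv S r)) = enc (sv S) false (gL r).
Proof. by rewrite ffunE liftK rk_sv. Qed.
Lemma PsiR N (S : {set 'I_N}) gL gR r :
  Psi S gL gR (lift ord0 (sv (~: S) r)) = enc (sv (~: S)) true (gR r).
Proof.
rewrite ffunE liftK rk_out ?rk_sv //; have := sv_in r; by rewrite inE.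
Qed.

Lemma liftlt N (a b : 'I_N) : (lift ord0 a < bump 0 b)%N = (a < b)%N.
Proof. by rewrite /bump /= !add1n ltnS. Qed.

Variant vcase N (S : {set 'I_N}) : 'I_N.+1 -> Prop :=
 | VC0 : vcase S ord0
 | VCL r : vcase S (lift ord0 (sv S r))
 | VCR r : vcase S (lift ord0 (sv (~: S) r)).

Lemma vcaseP N (S : {set 'I_N}) x : vcase S x.
Proof.
case: (unliftP ord0 x) => [i ->|->]; last exact: VC0.
case: (boolP (i \in S)) => h.
  have [r <-] := sv_surj h; exact: VCL.
have h' : i \in ~: S by rewrite inE.
have [r <-] := sv_surj h'; exact: VCR.
Qed.

Lemma PhiPsiL N (S : {set 'I_N}) gL gR : Phi S (Psi S gL gR) = gL.
Proof. apply/ffunP=> r; by rewrite ffunE PsiL dec_enc. Qed.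
Lemma PhiPsiR N (S : {set 'I_N}) gL gR : Phi (~: S) (Psi S gL gR) = gR.
Proof. apply/ffunP=> r; by rewrite ffunE PsiR dec_enc. Qed.

Lemma PS_Psi N (S : {set 'I_N}) gL gR : PS gL -> PS gR -> PS (Psi S gL gR).
Proof.
move=> pL pR x y b; case: (vcaseP S x) => [|r|r]; rewrite ?Psi0 ?PsiL ?PsiR //=.
- case E: (gL r) => [[j c]|] [<- _]; rewrite ?liftlt // sv_lt; exact: pL E.
- case E: (gR r) => [[j c]|] [<- _]; rewrite ?liftlt // sv_lt; exact: pR E.
Qed.

Lemma height_Psi N (S : {set 'I_N}) gL gR : PS gL -> PS gR ->
  [/\ forall r, height (Psi S gL gR) (lift ord0 (sv S r)) = (height gL r).+1,
      forall r, height (Psi S gL gR) (lift ord0 (sv (~: S) r)) = (height gR r).+1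
    & height (Psi S gL gR) ord0 = 0].
Proof.
move=> pL pR; have ps := PS_Psi pL pR.
pose HP x := if unlift ord0 x is Some i then
   (if rk S i is Some r then (height gL r).+1
    else if rk (~: S) i is Some r then (height gR r).+1 else 0) else 0.
have HP0 : HP ord0 = 0 by rewrite /HP unlift_none.
have HPL r : HP (lift ord0 (sv S r)) = (height gL r).+1 by rewrite /HP liftK rk_sv.
have HPR r : HP (lift ord0 (sv (~: S) r)) = (height gR r).+1.
  rewrite /HP liftK rk_out ?rk_sv //; have := sv_in r; by rewrite inE.
have hr : hrel (Psi S gL gR) HP.
  move=> x; case: (vcaseP S x) => [|r|r]; rewrite ?HP0 ?HPL ?HPR ?Psi0 ?PsiL ?PsiR //=.
  - rewrite (height_rec pL r); case: (gL r) => [[j c]|] /=; [by rewrite (HPL j) | by rewrite HP0].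
  - rewrite (height_rec pR r); case: (gR r) => [[j c]|] /=; [by rewrite (HPR j) | by rewrite HP0].
have e := height_uniq ps hr.
by split=> [r|r|]; rewrite -e ?HP0 ?HPL ?HPR.
Qed.

Definition sd N (f : tree_code N) := fval false (fun j b s => if val j == 0 then b else s) f.
Definition Lft N (f : tree_code N.+1) : {set 'I_N} := [set i | ~~ sd f (lift ord0 i)].

Lemma Lft_Psi N (S : {set 'I_N}) gL gR : PS gL -> PS gR -> Lft (Psi S gL gR) = S.
Proof.
move=> pL pR; have ps := PS_Psi pL pR.
pose G x := if unlift ord0 x is Some i then i \notin S else false.
have hr : frecrel false (fun j b s => if val j == 0 then b else s) (Psi S gL gR) G.
  move=> x; case: (vcaseP S x) => [|r|r]; rewrite /G ?unlift_none ?liftK ?Psi0 ?PsiL ?PsiR //=.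
  - rewrite sv_in /=; case: (gL r) => [[j c]|] //=; by rewrite liftK sv_in.
  - have := sv_in r; rewrite inE => ->; case: (gR r) => [[j c]|] //=.
    rewrite liftK; have := sv_in j; by rewrite inE.
have e := frec_unique ps (fval_rec _ _ ps) hr.
apply/setP=> i; by rewrite inE /sd e /G liftK negbK.
Qed.

Lemma hist_Psi B N (S : {set 'I_N}) gL gR : B 0 = true ->
  hist' (fun h => B h.+1) gL -> hist' (fun h => B h.+1) gR -> hist' B (Psi S gL gR).
Proof.
move=> B0 /histP[pL rL bL uL] /histP[pR rR bR uR].
have [hL hR h0] := @height_Psi N S gL gR pL pR.
apply/histP; split; first exact: PS_Psi.
- move=> x; case: (vcaseP S x) => [|r|r]; by rewrite ?Psi0 ?PsiL ?PsiR.
- move=> x y; case: (vcaseP S x) => [|r|r]; rewrite ?Psi0 ?PsiL ?PsiR //=.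
  + case E: (gL r) => [[j c]|] [<- ec]; last by [].
    subst c; rewrite hL; exact: bL E.
  + case E: (gR r) => [[j c]|] [<-]; last by rewrite h0.
    move=> ec; subst c; rewrite hR; exact: bR E.
- move=> x x'; case: (vcaseP S x) => [|r|r]; rewrite ?Psi0 ?PsiL ?PsiR // => _;
  case: (vcaseP S x') => [|r'|r']; rewrite ?Psi0 ?PsiL ?PsiR // => /enc_eq.
  + case E: (gL r) => [[j c]|]; case E': (gL r') => [[j' c']|] //.
    * case=> /sv_inj ej ec; subst; congr (lift ord0 (sv S _)); apply: uL; by rewrite ?E ?E'.
    * move=> _; congr (lift ord0 (sv S _)); apply: ord_inj; by rewrite (rL _ E) (rL _ E').
  + case: (gL r) => [[j c]|]; case: (gR r') => [[j' c']|] //.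
    case=> e _; have := sv_in j; rewrite e; have := sv_in j'; by rewrite inE => /negbTE ->.
  + case: (gR r) => [[j c]|]; case: (gL r') => [[j' c']|] //.
    case=> e _; have := sv_in j'; rewrite -e; have := sv_in j; by rewrite inE => /negbTE ->.
  + case E: (gR r) => [[j c]|]; case E': (gR r') => [[j' c']|] //.
    * case=> /sv_inj ej ec; subst; congr (lift ord0 (sv (~: S) _)); apply: uR; by rewrite ?E ?E'.
    * move=> _; congr (lift ord0 (sv (~: S) _)); apply: ord_inj; by rewrite (rR _ E) (rR _ E').
Qed.

Lemma sd_rec N (f : tree_code N) : PS f -> forall x,
  sd f x = match f x with None => false | Some (j, b) => if val j == 0 then b else sd f j end.
Proof. move=> ps x; exact: (fval_rec _ _ ps x). Qed.

Lemma fside B N (f : tree_code N.+1) (T : {set 'I_N}) s : hist' B f ->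
  (forall i, (i \in T) = (sd f (lift ord0 i) == s)) ->
  forall r, f (lift ord0 (sv T r)) = enc (sv T) s (Phi T f r).
Proof.
move=> /histP[ps r0 p u] hT r; rewrite ffunE.
have := hT (sv T r); rewrite sv_in (sd_rec ps) => /esym/eqP.
case E: (f (lift ord0 (sv T r))) => [[j b]|]; last by have := r0 _ E.
rewrite /=; case: (unliftP ord0 j) => [j' ->|->] /=.
- move=> hs.
  have : j' \in T by rewrite hT hs.
  move=> /sv_surj [r' <-]; by rewrite rk_sv.
- by move=> ->.
Qed.

Lemma hsL N (f : tree_code N.+1) (S : {set 'I_N}) : Lft f = S ->
  forall i, (i \in S) = (sd f (lift ord0 i) == false).
Proof. by move=> eL i; rewrite -eL inE eqbF_neg. Qed.
Lemma hsR N (f : tree_code N.+1) (S : {set 'I_N}) : Lft f = S ->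
  forall i, (i \in ~: S) = (sd f (lift ord0 i) == true).
Proof. by move=> eL i; rewrite inE -eL inE negbK eqb_id. Qed.

Lemma fPsi B N (f : tree_code N.+1) (S : {set 'I_N}) : hist' B f -> Lft f = S ->
  f = Psi S (Phi S f) (Phi (~: S) f).
Proof.
move=> hf eL.
have ps : PS f by case/histP: hf.
apply/ffunP=> x; case: (vcaseP S x) => [|r|r].
- rewrite Psi0; case E: (f ord0) => [[j b]|] //; by have := ps _ _ _ E.
- by rewrite PsiL (fside hf (hsL eL)).
- by rewrite PsiR (fside hf (hsR eL)).
Qed.

Lemma sub_PS N (f : tree_code N.+1) (T : {set 'I_N}) s (g : tree_code #|T|) : PS f ->
  (forall r, f (lift ord0 (sv T r)) = enc (sv T) s (g r)) -> PS g.
Proof.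
move=> ps hg r j b E; have := hg r; rewrite E => /ps.
rewrite -sv_lt; rewrite /= /bump /=; lia.
Qed.

Lemma sub_hist B N (f : tree_code N.+1) (T : {set 'I_N}) s (g : tree_code #|T|) :
  hist' B f ->
  (forall r, f (lift ord0 (sv T r)) = enc (sv T) s (g r)) ->
  (forall j, height f (lift ord0 (sv T j)) = (height g j).+1) ->
  hist' (fun h => B h.+1) g.
Proof.
move=> hf hg hh; have /histP[ps r0 p u] := hf.
have pg := sub_PS ps hg.
apply/histP; split => //.
- move=> r E.
  have n0 : (0 < #|T|)%N by apply: leq_ltn_trans (leq0n r) (ltn_ord r).
  pose z := Ordinal n0.
  have gz : g z = None by case Ez: (g z) => [[j b]|] //; have := pg _ _ _ Ez.
  have := u (lift ord0 (sv T r)) (lift ord0 (sv T z)); rewrite !hg E gz => /(_ isT erefl).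
  by move=> ee; have := sv_inj (lift_inj ee) => ->.
- move=> r j E; have := p (lift ord0 (sv T r)) (lift ord0 (sv T j)); rewrite hg E hh.
  by move=> /(_ erefl).
- move=> r r' h E; have := u (lift ord0 (sv T r)) (lift ord0 (sv T r')).
  rewrite !hg E => /(_ isT erefl) ee; exact: sv_inj (lift_inj ee).
Qed.

Definition cntB B k := #|[pred g : tree_code k | hist' B g]|.

Lemma cnt_S B N (S : {set 'I_N}) : B 0 = true ->
  #|[pred f : tree_code N.+1 | hist' B f && (Lft f == S)]| =
  cntB (fun h => B h.+1) #|S| * cntB (fun h => B h.+1) #|~: S|.
Proof.
move=> B0.
pose X := [set g : tree_code #|S| | hist' (fun h => B h.+1) g].
pose Y := [set g : tree_code #|~: S| | hist' (fun h => B h.+1) g].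
have -> : cntB (fun h => B h.+1) #|S| = #|X| by apply: eq_card => g; rewrite !inE.
have -> : cntB (fun h => B h.+1) #|~: S| = #|Y| by apply: eq_card => g; rewrite !inE.
rewrite -cardsX.
pose F := fun p : tree_code #|S| * tree_code #|~: S| => Psi S p.1 p.2.
have Finj : injective F.
  move=> [a b] [c d] /= e; rewrite /F /= in e.
  have := congr1 (Phi S) e; have := congr1 (Phi (~: S)) e.
  by rewrite !PhiPsiL !PhiPsiR => -> ->.
rewrite -(card_imset (setX X Y) Finj); apply: eq_card => f; rewrite inE.
apply/andP/imsetP.
- case=> hf /eqP eL.
  have ef := fPsi hf eL.
  have ps : PS f by case/histP: hf.
  have pL := sub_PS ps (fside hf (hsL eL)).
  have pR := sub_PS ps (fside hf (hsR eL)).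
  have [hL hR _] := @height_Psi N S (Phi S f) (Phi (~: S) f) pL pR.
  exists (Phi S f, Phi (~: S) f); last exact: ef.
  rewrite !inE /=; apply/andP; split.
  + apply: (sub_hist hf (fside hf (hsL eL))) => j; rewrite {1}ef; exact: hL.
  + apply: (sub_hist hf (fside hf (hsR eL))) => j; rewrite {1}ef; exact: hR.
- case=> [[a b]]; rewrite !inE /= => /andP[ha hb] ->; split; first exact: hist_Psi.
  apply/eqP; apply: Lft_Psi; [by case/histP: ha | by case/histP: hb].
Qed.

Lemma card_part (T U : finType) (P : pred T) (L : T -> U) :
  #|P| = \sum_(u : U) #|[pred x | P x && (L x == u)]|.
Proof.
rewrite -sum1_card (partition_big L predT) //=; apply: eq_bigr => u _.
by rewrite -sum1_card; apply: eq_bigl => x; rewrite !inE.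
Qed.

Lemma sum_card N (F : nat -> nat) :
  \sum_(S : {set 'I_N}) F #|S| = \sum_(k < N.+1) 'C(N, k) * F k.
Proof.
rewrite (partition_big (fun S : {set 'I_N} => (inord #|S| : 'I_N.+1)) predT) //=.
apply: eq_bigr => k _.
have le (S : {set 'I_N}) : (#|S| < N.+1)%N by have := subset_leq_card (subsetT S); rewrite cardsT card_ord.
transitivity (\sum_(S : {set 'I_N} | #|S| == k) F k).
  apply: eq_big => S.
    by rewrite -(inj_eq val_inj) /= inordK.
  by move=> /eqP <-; rewrite inordK.
rewrite sum_nat_const; congr (_ * _).
have := @card_draws ('I_N) k; rewrite card_ord => <-; apply: eq_card => S; by rewrite !inE.
Qed.

Lemma cnt_root B N : B 0 = true ->
  cntB B N.+1 = \sum_(k < N.+1) 'C(N, k) * (cntB (fun h => B h.+1) k * cntB (fun h => B h.+1) (N - k)).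
Proof.
move=> B0; rewrite {1}/cntB (card_part _ (@Lft N)).
rewrite -(sum_card N (fun k => cntB (fun h => B h.+1) k * cntB (fun h => B h.+1) (N - k))).
apply: eq_bigr => S _.
have e : #|~: S| = N - #|S| by have := cardsC S; rewrite card_ord; lia.
by rewrite (cnt_S S B0) e.
Qed.

Definition bh (m d h : nat) : bool := (d <= h) && ((h - d) %% m.+1 == 0).

Lemma cntB_ext B B' N : B =1 B' -> cntB B N = cntB B' N.
Proof. by move=> e; rewrite (functional_extensionality _ _ e). Qed.

Lemma hc_cnt m N : historic_count m N = cntB (bh m (2 * m)) N.
Proof. by []. Qed.

Lemma cnt0 B : cntB B 0 = 1.
Proof.
rewrite /cntB (eq_card (B := predT)); first by rewrite cardT -cardE card_ffun card_ord expn0.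
move=> f; rewrite !inE; apply/andP; split; [apply/andP; split|]; apply/forallP => -[] //.
Qed.

Lemma step1 m d N : (1 <= d)%N -> cntB (bh m d) N.+1 = cntB (bh m d.-1) N.
Proof.
move=> d1; rewrite /cntB cnt_up -/(cntB _ _); last by rewrite /bh; case: d d1.
apply: cntB_ext => h; rewrite /bh.
have -> : (d <= h.+1) = (d.-1 <= h) by apply/idP/idP; lia.
by have -> : h.+1 - d = h - d.-1 by lia.
Qed.

Lemma stepj m j : forall d N, (j <= d)%N -> cntB (bh m d) (N + j) = cntB (bh m (d - j)) N.
Proof.
elim: j => [|j IH] d N jd; first by rewrite addn0 subn0.
rewrite addnS step1; last by lia.
rewrite IH; last by lia.
by have -> : d.-1 - j = d - j.+1 by lia.
Qed.

Lemma rootstep m N : cntB (bh m 0) N.+1 =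
  \sum_(k < N.+1) 'C(N, k) * (cntB (bh m m) k * cntB (bh m m) (N - k)).
Proof.
have key : (fun h => bh m 0 h.+1) =1 bh m m.
  move=> h; rewrite /bh subn0 /=.
  case: (leqP m h) => hm /=.
    have -> : h.+1 = (h - m) + m.+1 by lia.
    by rewrite modnDr.
  by rewrite modn_small.
rewrite cnt_root; last by rewrite /bh mod0n.
by apply: eq_bigr => k _; rewrite !(cntB_ext _ key).
Qed.

Lemma combA m n : (1 <= m)%N ->
  historic_count m (n + m.+1 + m) =
  \sum_(k < n.+1) 'C(n, k) * (historic_count m (k + m) * historic_count m (n - k + m)).
Proof.
move=> m1; rewrite !hc_cnt.
have -> : n + m.+1 + m = n.+1 + 2 * m by lia.
rewrite stepj // subnn rootstep; apply: eq_bigr => k _.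
have hm2 : (m <= 2 * m)%N by lia.
rewrite !hc_cnt !stepj //.
by have -> : 2 * m - m = m by lia.
Qed.

Lemma combB m k : (k <= m)%N -> historic_count m (k + m) = 1.
Proof.
move=> km; rewrite hc_cnt stepj; last by lia.
have -> : k = 0 + k by [].
by rewrite stepj ?cnt0 //; lia.
Qed.

Local Open Scope ring_scope.

Lemma iter_deriv (F : fps) k n :
  iter k fps_deriv F n * (n`!)%:R = F (n + k)%N * ((n + k)`!)%:R.
Proof.
elim: k F n => [|k IH] F n; first by rewrite addn0.
rewrite iterSr IH /fps_deriv addnS factS natrM -mulr_natr; ring.
Qed.

Theorem mainTheorem8 (m : nat) (hm : (1 <= m)%N) :
  let H := egf (fun n => historic_count m (n + m)) in
  iter m.+1 fps_deriv H =1 fps_mul H H /\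
  (forall k : nat, (k <= m)%N -> iter k fps_deriv H 0%N = 1).
Proof.
move=> H.
have fnz n : (n`!)%:R != 0 :> rat by rewrite pnatr_eq0 -lt0n fact_gt0.
split.
- move=> n; apply: (mulIf (fnz n)); rewrite iter_deriv /H /egf divfK // combA //.
  rewrite /fps_mul mulr_suml natr_sum; apply: eq_bigr => k _.
  have kn : (k <= n)%N by rewrite -ltnS.
  rewrite -(bin_fact kn) !natrM.
  have := fnz k; have := fnz (n - k)%N; move: (k`!)%:R ((n - k)`!)%:R => a b ha hb.
  field; by rewrite ha hb.
- move=> k km; have := iter_deriv H k 0; rewrite fact0 mulr1 add0n => ->.
  by rewrite /H /egf divfK // combB.
Qed.
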